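(* Let $\mathscr T$ be a functor satisfying (T1)–(T4), let $\mathcal M_1,\mathcal M_2$ be complete orthomodular lattices and $k\colon\mathcal M_1\to\mathcal M_2$ an ortholattice isomorphism. Then the map $\Gamma(k)\colon\Gamma(\mathcal M_1)\to\Gamma(\mathcal M_2)$, $\Gamma(k)(A)=\{k\circ a\circ k^{-1}\mid a\in A\}$, is a $\mathscr T\mathbb{ODA}$-morphism, i.e. a bijective morphism of involutive generalized dynamic algebras.
   Context: $\Gamma(\mathcal M)=\mathscr P(\mathscr T(\mathbf{Lin}(\mathcal M)))$. An involutive unital quantale is $(Q,\bigsqcup,\odot,{}^*,e)$: complete join-semilattice $Q$, associative $\odot$ distributing over arbitrary joins in each argument, unit $e$, ${}^*$ with $x^{**}=x$, $(x\odot y)^*=y^*\odot x^*$, $(\bigsqcup x_i)^*=\bigsqcup x_i^*$. An involutive generalized dynamic algebra (IDA) is such a quantale with ${\sim}\colon K\to K$ satisfying, for all $x,y$ and families $(x_i)$: ${\sim}(x\odot{\sim}{\sim}y)={\sim}(x\odot y)$; ${\sim}(\bigsqcup{\sim}{\sim}x_i)={\sim}(\bigsqcup x_i)$; $({\sim}x)^*={\sim}x$; ${\sim}{\sim}({\sim}{\sim}x\odot y)={\sim}({\sim}x\sqcup{\sim}({\sim}x\sqcup y))$. Test set $\widetilde K=\{{\sim}k\}$; $\bigvee W={\sim}{\sim}\bigsqcup W$; $w^\perp={\sim}w$; $k\preceq l$ iff $\bigvee\{k,l\}=l$; $k\bullet v={\sim}{\sim}(k\odot v)$; $k\equiv l$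 iff $k\bullet w=l\bullet w$ for all $w\in\widetilde K$. A morphism of IDAs preserves arbitrary joins, $\odot$, ${}^*$, unit, ${\sim}$ (category $\mathbb{IDA}$); semi-Foulis means $(\widetilde K,\preceq,{}^\perp)$ is a complete orthomodular lattice. $\mathbb{IM}$: involutive monoids and homomorphisms. For a complete orthomodular lattice $\mathcal M$: $\pi_m(x)=m\wedge(m^\perp\vee x)$; $\mathbf{Lin}(\mathcal M)$ is the set of maps $f$ admitting $f^*$ with $f(x)\le y^\perp\iff x\le f^*(y)^\perp$, an IDA under pointwise joins, composition, ${}^*$, $\mathrm{id}$, ${\sim}f=\pi_{f(1)^\perp}$. For an involutive submonoid $L\supseteq\{\pi_m\}$, $\mathscr P(L)$ is the IDA of subsets of $L$ with union, setwise composition $A\odot B=\{a\circ b\}$, $A^*=\{a^*\}$, unit $\{\mathrm{id}_M\}$, ${\sim}A=\{\pi_{(\bigvee_{a\in A}a(1))^\perp}\}$. $\mathscr T\colon\mathbb{IDA}\to\mathbb{IM}$ satisfies: (T1) $\widetilde K\subseteq\mathscr T(K)\subseteq K$, $\mathscr T(K)$ an involutive submonoid; (T2) for semi-Foulis $\mathfrak K$ with $s=t\iff s\equiv t$ on $\mathscr T(K)$, $k\mapsto k\bullet(-)$ is an isomorphism $\mathscr T(\mathfrak K)\to\mathscr T(\mathbf{Lin}(\widetilde{\mathfrak K}))$; (T3) $f\mapsto\{f\}$ is an isomorphism $\mathscr T(\mathbf{Lin}(\mathcal M))\to\mathscr T(\mathscr P(\mathscr T(\mathbf{Lin}(\mathcal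 M))))$; (T4) $\mathscr T(f)$ is the restriction of $f$. An ortholattice isomorphism is a bijection $g$ with $m\le n\iff g(m)\le g(n)$ and $g(m^\perp)=g(m)^\perp$. *)

(* Defs.v *)
From Stdlib Require Import ClassicalEpsilon.

Set Implicit Arguments.
Unset Strict Implicit.

Record OrthoSig := { car : Type; ole : car -> car -> Prop; operp : car -> car }.

Section Ortho.
Variable O : OrthoSig.
Notation le := (@ole O).
Notation perp := (@operp O).

Definition is_lub (W : car O -> Prop) (s : car O) : Prop :=
  (forall w, W w -> le w s) /\ (forall u, (forall w, W w -> le w u) -> le s u).

(* the supremum of W (chosen classically; x0 is a default if none exists) *)
Definition osup (x0 : car O) (W : car O -> Prop) : car O :=
  match excluded_middle_informative (exists s, is_lub W s) with
  | left p => proj1_sig (constructive_indefinite_description _ p)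
  | right _ => x0
  end.

Definition join2 (a b : car O) : car O := osup a (fun z => z = a \/ z = b).
Definition meet2 (a b : car O) : car O := perp (join2 (perp a) (perp b)).
Definition otop (x0 : car O) : car O := osup x0 (fun _ => True).

Definition is_cOML : Prop :=
  (forall x, le x x) /\
  (forall x y, le x y -> le y x -> x = y) /\
  (forall x y z, le x y -> le y z -> le x z) /\
  (forall W : car O -> Prop, exists s, is_lub W s) /\
  (forall x, perp (perp x) = x) /\
  (forall x y, le x y -> le (perp y) (perp x)) /\
  (forall x y, le y (join2 x (perp x))) /\
  (forall x y, le x y -> y = join2 x (meet2 y (perp x))).

Definition sasaki (m x : car O) : car O := meet2 m (join2 (perp m) x).

Definition adjoint (f g : car O -> car O) : Prop :=
  forall x y, le (f x) (perp y) <-> le x (perp (g y)).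

Definition LinT : Type := { f : car O -> car O | exists g, adjoint f g }.

Definition idLin : LinT :=
  exist _ (fun x => x)
    (ex_intro (fun g => adjoint (fun x => x) g) (fun x => x) (fun x y => iff_refl _)).

(* package a map as an element of Lin (identity if it admits no adjoint;
   on complete OMLs all uses below are genuinely in Lin) *)
Definition toLin (f : car O -> car O) : LinT :=
  match excluded_middle_informative (exists g, adjoint f g) with
  | left p => exist _ f p
  | right _ => idLin
  end.

Definition linStar (f : LinT) : LinT :=
  toLin (proj1_sig (constructive_indefinite_description _ (proj2_sig f))).
Definition linComp (f g : LinT) : LinT :=
  toLin (fun x => proj1_sig f (proj1_sig g x)).
Definition linJoin (F : LinT -> Prop) : LinT :=
  toLin (fun x => osup x (fun y => exists f, F f /\ y = proj1_sig f x)).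
Definition linNeg (f : LinT) : LinT :=
  toLin (fun x => sasaki (perp (proj1_sig f (otop x))) x).

End Ortho.

Record IDAsig := {
  icar : Type;
  ijoin : (icar -> Prop) -> icar;
  imul : icar -> icar -> icar;
  istar : icar -> icar;
  iunit : icar;
  ineg : icar -> icar }.

Definition image {A B : Type} (f : A -> B) (W : A -> Prop) : B -> Prop :=
  fun y => exists w, W w /\ y = f w.

Definition pair {A : Type} (a b : A) : A -> Prop := fun z => z = a \/ z = b.

Section IDA.
Variable K : IDAsig.
Notation J := (@ijoin K).
Notation mul := (@imul K).
Notation st := (@istar K).
Notation ng := (@ineg K).

Definition ile (x y : icar K) : Prop := J (pair x y) = y.

Definition is_IDA : Prop :=
  (forall x, ile x x) /\
  (forall x y, ile x y -> ile y x -> x = y) /\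
  (forall x y z, ile x y -> ile y z -> ile x z) /\
  (forall W, (forall w, W w -> ile w (J W)) /\
             (forall u, (forall w, W w -> ile w u) -> ile (J W) u)) /\
  (forall x y z, mul x (mul y z) = mul (mul x y) z) /\
  (forall x, mul (@iunit K) x = x) /\ (forall x, mul x (@iunit K) = x) /\
  (forall x W, mul x (J W) = J (image (mul x) W)) /\
  (forall x W, mul (J W) x = J (image (fun w => mul w x) W)) /\
  (forall x, st (st x) = x) /\
  (forall x y, st (mul x y) = mul (st y) (st x)) /\
  (forall W, st (J W) = J (image st W)) /\
  (forall x y, ng (mul x (ng (ng y))) = ng (mul x y)) /\
  (forall W, ng (J (image (fun x => ng (ng x)) W)) = ng (J W)) /\
  (forall x, st (ng x) = ng x) /\
  (forall x y, ng (ng (mul (ng (ng x)) y)) = ng (J (pair (ng x) (ng (J (pair (ng x) y)))))).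

Definition tst (k : icar K) : Prop := exists l, k = ng l.
Definition tjoin (W : icar K -> Prop) : icar K := ng (ng (J W)).
Definition tle (k l : icar K) : Prop := tjoin (pair k l) = l.
Definition bullet (k v : icar K) : icar K := ng (ng (mul k v)).
Definition tequiv (k l : icar K) : Prop :=
  forall w, tst w -> bullet k w = bullet l w.

Definition TestT : Type := { k : icar K | tst k }.
Definition test_perp (w : TestT) : TestT :=
  exist _ (ng (proj1_sig w)) (ex_intro _ (proj1_sig w) eq_refl).
Definition TestSig : OrthoSig :=
  {| car := TestT; ole := fun k l => tle (proj1_sig k) (proj1_sig l);
     operp := test_perp |}.

Definition semiFoulis : Prop := is_cOML TestSig.

Definition bulletMap (k : icar K) : car TestSig -> car TestSig :=
  fun w => exist _ (bullet k (proj1_sig w))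
                 (ex_intro _ (ng (mul k (proj1_sig w))) eq_refl).
End IDA.

Definition IDA_morphism (K L : IDAsig) (f : icar K -> icar L) : Prop :=
  (forall W, f (@ijoin K W) = @ijoin L (image f W)) /\
  (forall x y, f (@imul K x y) = @imul L (f x) (f y)) /\
  (forall x, f (@istar K x) = @istar L (f x)) /\
  f (@iunit K) = @iunit L /\
  (forall x, f (@ineg K x) = @ineg L (f x)).

Definition Lin (O : OrthoSig) : IDAsig :=
  {| icar := LinT O; ijoin := @linJoin O; imul := @linComp O;
     istar := @linStar O; iunit := idLin O; ineg := @linNeg O |}.

Section Pow.
Variables (O : OrthoSig) (L : LinT O -> Prop).
Definition subL : Type := { a : LinT O | L a }.
Definition Pcar : Type := subL -> Prop.
Definition Pjoin (W : Pcar -> Prop) : Pcar := fun c => exists A, W A /\ A c.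
Definition Pmul (A B : Pcar) : Pcar :=
  fun c => exists a b, A a /\ B b /\ proj1_sig c = linComp (proj1_sig a) (proj1_sig b).
Definition Pstar (A : Pcar) : Pcar :=
  fun c => exists a, A a /\ proj1_sig c = linStar (proj1_sig a).
Definition Punit : Pcar := fun c => proj1_sig c = idLin O.
Definition Pneg (A : Pcar) : Pcar :=
  fun c => proj1_sig c =
    toLin (fun x => sasaki (@operp O
       (osup x (fun y => exists a, A a /\ y = proj1_sig (proj1_sig a) (otop x)))) x).
Definition Pow : IDAsig :=
  {| icar := Pcar; ijoin := Pjoin; imul := Pmul; istar := Pstar;
     iunit := Punit; ineg := Pneg |}.
End Pow.

(* The functor T is given by its object part T(K) (a subset of K, by (T1)). *)
Definition TFun : Type := forall K : IDAsig, icar K -> Prop.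

Definition Gamma (T : TFun) (O : OrthoSig) : IDAsig := Pow (T (Lin O)).

Definition IM_iso (K L : IDAsig) (P : icar K -> Prop) (Q : icar L -> Prop)
  (phi : icar K -> icar L) : Prop :=
  (forall x, P x -> Q (phi x)) /\
  (forall x y, P x -> P y -> phi x = phi y -> x = y) /\
  (forall z, Q z -> exists x, P x /\ phi x = z) /\
  (forall x y, P x -> P y -> phi (@imul K x y) = @imul L (phi x) (phi y)) /\
  (forall x, P x -> phi (@istar K x) = @istar L (phi x)) /\
  phi (@iunit K) = @iunit L.

Definition T1 (T : TFun) : Prop :=
  forall K, is_IDA K ->
    (forall k, tst k -> T K k) /\ T K (@iunit K) /\
    (forall x y, T K x -> T K y -> T K (@imul K x y)) /\
    (forall x, T K x -> T K (@istar K x)).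

Definition T2 (T : TFun) : Prop :=
  forall K, is_IDA K -> semiFoulis K ->
    (forall s t, T K s -> T K t -> (s = t <-> tequiv s t)) ->
    (forall k, T K k -> exists g, adjoint (bulletMap k) g) /\
    IM_iso (T K) (T (Lin (TestSig K))) (fun k => toLin (bulletMap k)).

Definition T3 (T : TFun) : Prop :=
  forall O, is_cOML O ->
    IM_iso (K := Lin O) (L := Gamma T O) (T (Lin O)) (T (Gamma T O))
      (fun f => fun c => proj1_sig c = f).

Definition T4 (T : TFun) : Prop :=
  forall (K L : IDAsig) (f : icar K -> icar L),
    is_IDA K -> is_IDA L -> IDA_morphism f -> forall x, T K x -> T L (f x).

Definition ortho_iso (O1 O2 : OrthoSig) (k : car O1 -> car O2) (kinv : car O2 -> car O1) : Prop :=
  (forall m, kinv (k m) = m) /\ (forall n, k (kinv n) = n) /\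
  (forall m n, @ole O1 m n <-> @ole O2 (k m) (k n)) /\
  (forall m, k (@operp O1 m) = @operp O2 (k m)).

Definition GammaMap (T : TFun) (O1 O2 : OrthoSig) (k : car O1 -> car O2)
  (kinv : car O2 -> car O1) : icar (Gamma T O1) -> icar (Gamma T O2) :=
  fun A b => exists a, A a /\
    proj1_sig (proj1_sig b) = (fun x => k (proj1_sig (proj1_sig a) (kinv x))).

Definition bijectiveF {A B : Type} (f : A -> B) : Prop :=
  (forall x y, f x = f y -> x = y) /\ (forall z, exists x, f x = z).

(* Main.v *)
Require Import Defs.
From Stdlib Require Import ClassicalEpsilon ProofIrrelevance FunctionalExtensionality PropExtensionality.

Module P1.
Set Implicit Arguments.
Unset Strict Implicit.

Section OrthoFacts.
Variable O : OrthoSig.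
Variable H : is_cOML O.
Notation le := (@ole O).
Notation perp := (@operp O).
Implicit Types a b c d m x y z u w s t : car O.

Lemma le_refl x : le x x. Proof. apply H. Qed.
Lemma le_antisym x y : le x y -> le y x -> x = y. Proof. apply H. Qed.
Lemma le_trans x y z : le x y -> le y z -> le x z. Proof. apply H. Qed.
Lemma lub_ex (W : car O -> Prop) : exists s, is_lub W s. Proof. apply H. Qed.
Lemma perpK x : perp (perp x) = x. Proof. apply H. Qed.
Lemma perp_anti x y : le x y -> le (perp y) (perp x). Proof. apply H. Qed.
Lemma oml x y : le x y -> y = join2 x (meet2 y (perp x)). Proof. apply H. Qed.

Lemma perp_le x y : le (perp x) (perp y) -> le y x.
Proof. intro h. rewrite <- (perpK x), <- (perpK y). now apply perp_anti. Qed.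
Lemma le_perp_r x y : le x (perp y) -> le y (perp x).
Proof. intro h. apply perp_le. rewrite perpK. exact h. Qed.

Lemma osup_lub (x0 : car O) W : is_lub W (osup x0 W).
Proof.
  unfold osup. destruct (excluded_middle_informative _) as [p|n].
  - exact (proj2_sig (constructive_indefinite_description _ p)).
  - exfalso. apply n, lub_ex.
Qed.

Lemma lub_unique (W : car O -> Prop) s t : is_lub W s -> is_lub W t -> s = t.
Proof. intros [a b] [c d]. apply le_antisym; auto. Qed.

Lemma osup_eq (x0 : car O) W s : is_lub W s -> osup x0 W = s.
Proof. intro h. eapply lub_unique; [apply osup_lub|exact h]. Qed.

Lemma lub_ext (W W' : car O -> Prop) s : (forall w, W w <-> W' w) -> is_lub W s -> is_lub W' s.
Proof. intros e [a b]; split; [intros w hw; apply a, e, hw| intros u hu; apply b; intros w hw; apply hu, e, hw]. Qed.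

Lemma osup_ext (x0 x1 : car O) (W W' : car O -> Prop) : (forall w, W w <-> W' w) -> osup x0 W = osup x1 W'.
Proof. intro e. apply osup_eq. apply (lub_ext (W:=W') (W':=W)); [intro w; symmetry; apply e|apply osup_lub]. Qed.

Lemma osup_ub (x0 : car O) W w : W w -> le w (osup x0 W).
Proof. apply (osup_lub x0 W). Qed.
Lemma osup_least (x0 : car O) W u : (forall w, W w -> le w u) -> le (osup x0 W) u.
Proof. apply (osup_lub x0 W). Qed.

Lemma join2_l a b : le a (join2 a b). Proof. apply osup_ub. now left. Qed.
Lemma join2_r a b : le b (join2 a b). Proof. apply osup_ub. now right. Qed.
Lemma join2_least a b u : le a u -> le b u -> le (join2 a b) u.
Proof. intros. apply osup_least. intros w [->| ->]; auto. Qed.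

Lemma meet2_l a b : le (meet2 a b) a.
Proof. unfold meet2. apply perp_le. rewrite perpK. apply join2_l. Qed.
Lemma meet2_r a b : le (meet2 a b) b.
Proof. unfold meet2. apply perp_le. rewrite perpK. apply join2_r. Qed.
Lemma meet2_greatest a b z : le z a -> le z b -> le z (meet2 a b).
Proof. intros. unfold meet2. apply le_perp_r. apply join2_least; now apply perp_anti. Qed.

Lemma otop_top (x0 : car O) y : le y (otop x0). Proof. apply osup_ub. exact I. Qed.
Lemma otop_eq (x0 x1 : car O) : otop x0 = otop x1.
Proof. apply osup_ext. tauto. Qed.

Lemma join2_mono a b c d : le a c -> le b d -> le (join2 a b) (join2 c d).
Proof. intros. apply join2_least; eapply le_trans; eauto using join2_l, join2_r. Qed.
Lemma meet2_mono a b c d : le a c -> le b d -> le (meet2 a b) (meet2 c d).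
Proof. intros. apply meet2_greatest; [eapply le_trans; [apply meet2_l|auto]|eapply le_trans; [apply meet2_r|auto]]. Qed.
Lemma join2_comm a b : join2 a b = join2 b a.
Proof. apply le_antisym; apply join2_least; auto using join2_l, join2_r. Qed.
Lemma meet2_comm a b : meet2 a b = meet2 b a.
Proof. apply le_antisym; apply meet2_greatest; auto using meet2_l, meet2_r. Qed.

Lemma oml_dual a b : le a b -> a = meet2 b (join2 a (perp b)).
Proof.
  intro h. apply perp_anti in h. apply oml in h.
  unfold meet2 in *. rewrite !perpK in h. rewrite <- h. rewrite perpK. reflexivity.
Qed.

Lemma sasaki_mono m x y : le x y -> le (sasaki m x) (sasaki m y).
Proof. intro. unfold sasaki. apply meet2_mono; [apply le_refl|apply join2_mono; auto using le_refl]. Qed.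
Lemma sasaki_le m x : le (sasaki m x) m. Proof. apply meet2_l. Qed.
Lemma sasaki_top (m : car O) x0 : sasaki m (otop x0) = m.
Proof.
  apply le_antisym; [apply sasaki_le|]. apply meet2_greatest; [apply le_refl|].
  eapply le_trans; [apply otop_top with (x0:=x0)|apply join2_r].
Qed.

Lemma sasaki_galois m x y : le (sasaki m x) y <-> le x (join2 (perp m) (meet2 m y)).
Proof.
  split.
  - intro h. assert (e := oml (join2_l (perp m) x)). rewrite perpK in e.
    eapply le_trans; [apply join2_r|]. rewrite e. apply join2_mono; [apply le_refl|].
    apply meet2_greatest; [apply meet2_r|]. eapply le_trans; [|exact h].
    unfold sasaki. rewrite meet2_comm. apply le_refl.
  - intro h. eapply le_trans; [apply sasaki_mono, h|].
    assert (e := oml_dual (meet2_l m y)).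
    eapply le_trans with (meet2 m (join2 (meet2 m y) (perp m))).
    + unfold sasaki. apply meet2_mono; [apply le_refl|].
      apply join2_least; [apply join2_r|]. rewrite join2_comm. apply le_refl.
    + rewrite <- e. apply meet2_r.
Qed.

Lemma sasaki_adj (m : car O) : adjoint (sasaki m) (sasaki m).
Proof.
  intros x y. rewrite sasaki_galois. unfold sasaki, meet2. rewrite !perpK. tauto.
Qed.

End OrthoFacts.

End P1.
Import P1.

Module P2.
Set Implicit Arguments.

Section LinFacts.
Variable O : OrthoSig.
Variable H : is_cOML O.
Notation le := (@ole O).
Notation perp := (@operp O).
Implicit Types a b c d m x y z u w s t : car O.
Implicit Types f g h : car O -> car O.
Notation fv := (@proj1_sig _ _).

Lemma lin_eq (p q : LinT O) : fv p = fv q -> p = q.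
Proof. destruct p, q; simpl; intros ->. f_equal. apply proof_irrelevance. Qed.

Lemma adj_sym f g : adjoint f g -> adjoint g f.
Proof.
  intros A x y. split; intro h0.
  - apply (le_perp_r H) in h0. apply A in h0. apply (le_perp_r H) in h0. exact h0.
  - apply (le_perp_r H) in h0. apply A in h0. apply (le_perp_r H) in h0. exact h0.
Qed.

Lemma adj_unique f g g' : adjoint f g -> adjoint f g' -> g = g'.
Proof.
  intros A B. apply functional_extensionality. intro y.
  assert (e : perp (g y) = perp (g' y)).
  { apply le_antisym; auto.
    - apply B, A, le_refl; auto.
    - apply A, B, le_refl; auto. }
  rewrite <- (perpK H (g y)), e, perpK; auto.
Qed.

Lemma adj_mono f g x y : adjoint f g -> le x y -> le (f x) (f y).
Proof.
  intros A h0. rewrite <- (perpK H (f y)). apply A.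
  eapply (le_trans H); eauto. apply A. rewrite perpK; auto. apply le_refl; auto.
Qed.

Lemma adj_lub f g W s : adjoint f g -> is_lub W s -> is_lub (image f W) (f s).
Proof.
  intros A [h1 h2]. split.
  - intros w [v [hv ->]]. eapply adj_mono; eauto.
  - intros u hu. rewrite <- (perpK H u). apply A. apply h2. intros w hw.
    apply A. rewrite perpK; auto. apply hu. exists w; auto.
Qed.

Lemma adj_comp f g f' g' : adjoint f f' -> adjoint g g' -> adjoint (fun x => f (g x)) (fun y => g' (f' y)).
Proof. intros A B x y. unfold adjoint in A, B. rewrite (A (g x) y), (B x (f' y)). tauto. Qed.

Lemma toLin_val f g : adjoint f g -> fv (toLin f) = f.
Proof.
  intro A. unfold toLin. destruct (excluded_middle_informative _) as [p|n]; [reflexivity|].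
  exfalso. apply n. eauto.
Qed.

Lemma lin_adj (p : LinT O) : exists g, adjoint (fv p) g.
Proof. exact (proj2_sig p). Qed.

Lemma star_adj (p : LinT O) : adjoint (fv p) (fv (linStar p)).
Proof.
  unfold linStar. destruct (constructive_indefinite_description _ (proj2_sig p)) as [g A]. simpl.
  rewrite (toLin_val (g:=fv p)); auto. apply adj_sym; auto.
Qed.

Lemma comp_val (p q : LinT O) : fv (linComp p q) = fun x => fv p (fv q x).
Proof.
  unfold linComp. apply toLin_val with (g := fun y => fv (linStar q) (fv (linStar p) y)).
  apply adj_comp; apply star_adj.
Qed.

Lemma join_adj (F : LinT O -> Prop) :
  adjoint (fun x => osup x (fun y => exists p, F p /\ y = fv p x))
          (fun y => osup y (fun z => exists p, F p /\ z = fv (linStar p) y)).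
Proof.
  intros x y. split; intro h0.
  - apply le_perp_r; auto. apply osup_least; auto. intros w [p [hp ->]].
    apply le_perp_r; auto. apply (star_adj p).
    eapply (le_trans H); [|exact h0]. apply osup_ub; eauto.
  - apply osup_least; auto. intros w [p [hp ->]]. apply (star_adj p).
    eapply (le_trans H); [exact h0|]. apply perp_anti; auto. apply osup_ub; eauto.
Qed.

Lemma join_val (F : LinT O -> Prop) :
  fv (linJoin F) = fun x => osup x (fun y => exists p, F p /\ y = fv p x).
Proof. unfold linJoin. eapply toLin_val, join_adj. Qed.

Lemma neg_fun_eq (p : LinT O) x0 :
  (fun x => sasaki (perp (fv p (otop x))) x) = sasaki (perp (fv p (otop x0))).
Proof. apply functional_extensionality. intro x. rewrite (otop_eq H x x0). reflexivity. Qed.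

Lemma neg_val (p : LinT O) x : fv (linNeg p) x = sasaki (perp (fv p (otop x))) x.
Proof.
  unfold linNeg. rewrite (toLin_val (g := sasaki (perp (fv p (otop x))))). reflexivity.
  rewrite (neg_fun_eq p x). apply sasaki_adj; auto.
Qed.

Lemma neg_top (p : LinT O) x : fv (linNeg p) (otop x) = perp (fv p (otop x)).
Proof. rewrite neg_val. rewrite (otop_eq H (otop x) x). apply sasaki_top; auto. Qed.

Lemma negneg_val (p : LinT O) x : fv (linNeg (linNeg p)) x = sasaki (fv p (otop x)) x.
Proof. rewrite neg_val, neg_top, perpK; auto. Qed.

Lemma join2_val (p q : LinT O) x : fv (linJoin (pair p q)) x = join2 (fv p x) (fv q x).
Proof.
  rewrite join_val. apply osup_ext; auto. intro w; split.
  - intros [r [[->| ->] ->]]; [left|right]; auto.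
  - intros [->| ->]; eexists; split; eauto; [left|right]; auto.
Qed.

Lemma ile_iff (p q : LinT O) : ile (K := Lin O) p q <-> forall x, le (fv p x) (fv q x).
Proof.
  unfold ile. simpl. split.
  - intros e x. rewrite <- e. rewrite join2_val. apply join2_l; auto.
  - intro h0. apply lin_eq. apply functional_extensionality. intro x. rewrite join2_val.
    apply le_antisym; auto. apply join2_least; auto using le_refl. apply join2_r; auto.
Qed.

End LinFacts.

End P2.
Import P2.

Module P3.
Set Implicit Arguments.

Section LinIDA.
Variable O : OrthoSig.
Variable H : is_cOML O.
Notation le := (@ole O).
Notation perp := (@operp O).
Implicit Types a b c d m x y z u w s t : car O.
Notation fv := (@proj1_sig _ _).
Notation L := (Lin O).

Lemma lin_ext (p q : LinT O) : (forall x, fv p x = fv q x) -> p = q.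
Proof. intro e. apply lin_eq, functional_extensionality, e. Qed.

Lemma star_val_eq (p : LinT O) g : adjoint (fv p) g -> fv (linStar p) = g.
Proof. intro A. eapply adj_unique; eauto. apply star_adj; auto. Qed.

Lemma neg_adj (p : LinT O) : adjoint (fv (linNeg p)) (fv (linNeg p)).
Proof. intros x y. rewrite !neg_val; auto. rewrite (otop_eq H x y). apply sasaki_adj; auto. Qed.

Lemma Lin_is_IDA : is_IDA L.
Proof.
  unfold is_IDA; simpl.
  repeat split.
  - intro p. apply ile_iff; auto. intro; apply le_refl; auto.
  - intros p q h1 h2. rewrite ile_iff in h1, h2 by auto. apply lin_ext. intro; apply le_antisym; auto.
  - intros p q r h1 h2. rewrite ile_iff in * by auto. intro; eapply (le_trans H); eauto.
  - intros w hw. apply ile_iff; auto. intro x. rewrite join_val; auto. apply osup_ub; eauto.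
  - intros u hu. apply ile_iff; auto. intro x. rewrite join_val; auto. apply osup_least; auto.
    intros v [p [hp ->]]. specialize (hu p hp). rewrite ile_iff in hu by auto. apply hu.
  - intros p q r. apply lin_ext; intro x. rewrite !comp_val; auto.
  - intro p. apply lin_ext; intro x. rewrite comp_val; auto.
  - intro p. apply lin_ext; intro x. rewrite comp_val; auto.
  - intros p W. apply lin_ext; intro x. rewrite comp_val, !join_val; auto.
    symmetry. apply osup_eq; auto.
    destruct (lin_adj p) as [g A].
    apply (lub_ext (W := image (fv p) (fun y => exists q, W q /\ y = fv q x))).
    + intro v; split.
      * intros [y [[q [hq ->]] ->]]. exists (linComp p q). split; [exists q; auto|]. rewrite comp_val; auto.
      * intros [r [[q [hq ->]] ->]]. exists (fv q x). split; [exists q; auto|]. rewrite comp_val; auto.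
    + eapply adj_lub; eauto. apply osup_lub; auto.
  - intros p W. apply lin_ext; intro x. rewrite comp_val, !join_val; auto.
    apply osup_ext; auto. intro v; split.
    + intros [q [hq ->]]. exists (linComp q p). split; [exists q; auto|]. rewrite comp_val; auto.
    + intros [r [[q [hq ->]] ->]]. exists q. split; auto. rewrite comp_val; auto.
  - intro p. apply lin_eq. apply star_val_eq. apply adj_sym; auto. apply star_adj; auto.
  - intros p q. apply lin_eq. apply star_val_eq. rewrite !comp_val; auto.
    apply adj_comp; apply star_adj; auto.
  - intro W. apply lin_eq. apply star_val_eq. rewrite !join_val; auto.
    replace (fun x => osup x (fun y => exists p, image (linStar (O:=O)) W p /\ y = fv p x))
      with (fun y => osup y (fun z => exists p, W p /\ z = fv (linStar p) y)).
    + apply join_adj; auto.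
    + apply functional_extensionality; intro x. apply osup_ext; auto. intro v; split.
      * intros [p [hp ->]]. exists (linStar p). split; auto. exists p; auto.
      * intros [r [[p [hp ->]] ->]]. exists p; auto.
  - intros p q. apply lin_ext; intro x. rewrite !neg_val, !comp_val, negneg_val; auto.
    rewrite (otop_eq H (otop x) x), sasaki_top; auto.
  - intro W. apply lin_ext; intro x. rewrite !neg_val, !join_val; auto.
    f_equal. f_equal. apply osup_ext; auto. intro v; split.
    + intros [r [[p [hp ->]] ->]]. exists p. split; auto. rewrite negneg_val; auto.
      rewrite (otop_eq H (otop x) x), sasaki_top; auto.
    + intros [p [hp ->]]. exists (linNeg (linNeg p)). split; [exists p; auto|].
      rewrite negneg_val; auto. rewrite (otop_eq H (otop x) x), sasaki_top; auto.
  - intro p. apply lin_eq. apply star_val_eq.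
    intros x y. rewrite !neg_val; auto. rewrite (otop_eq H x y). apply sasaki_adj; auto.
  - intros p q. apply lin_ext; intro x. rewrite negneg_val, comp_val, negneg_val, neg_val; auto.
    rewrite join2_val, neg_top, neg_val, join2_val, neg_top; auto.
    rewrite (otop_eq H (fv q (otop x)) x), (otop_eq H (otop x) x), sasaki_top; auto.
Qed.
End LinIDA.

End P3.
Import P3.

Module P4.
Set Implicit Arguments.

Lemma ortho_iso_sym (O1 O2 : OrthoSig) k kinv :
  @ortho_iso O1 O2 k kinv -> @ortho_iso O2 O1 kinv k.
Proof.
  intros [h1 [h2 [h3 h4]]]. split; [exact h2|split; [exact h1|split]].
  - intros m n. rewrite h3, !h2. tauto.
  - intro m. rewrite <- (h1 (operp (kinv m))). f_equal. rewrite h4, h2. reflexivity.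
Qed.

Section Conj.
Variables O1 O2 : OrthoSig.
Variable H1 : is_cOML O1.
Variable H2 : is_cOML O2.
Variables (k : car O1 -> car O2) (kinv : car O2 -> car O1).
Variable Hk : ortho_iso k kinv.
Notation fv := (@proj1_sig _ _).

Lemma kK m : kinv (k m) = m. Proof. apply Hk. Qed.
Lemma kinvK n : k (kinv n) = n. Proof. apply Hk. Qed.
Lemma k_le m n : ole m n <-> ole (k m) (k n). Proof. apply Hk. Qed.
Lemma k_perp m : k (operp m) = operp (k m). Proof. apply Hk. Qed.
Lemma kinv_perp n : kinv (operp n) = operp (kinv n).
Proof. rewrite <- (kK (operp (kinv n))), k_perp, kinvK. reflexivity. Qed.

Lemma k_lub W s : is_lub W s -> is_lub (image k W) (k s).
Proof.
  intros [a b]. split.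
  - intros w [v [hv ->]]. apply k_le, a, hv.
  - intros u hu. rewrite <- (kinvK u). apply k_le. apply b. intros w hw.
    apply k_le. rewrite kinvK. apply hu. exists w; auto.
Qed.

Lemma k_osup x0 y0 W (W' : car O2 -> Prop) :
  (forall z, W' z <-> image k W z) -> k (osup x0 W) = osup y0 W'.
Proof.
  intro e. symmetry. apply osup_eq; auto. apply (lub_ext (W := image k W)).
  - intro; symmetry; apply e.
  - apply k_lub, osup_lub; auto.
Qed.

Lemma k_join2 a b : k (join2 a b) = join2 (k a) (k b).
Proof.
  apply k_osup. intro z; split.
  - intros [-> | ->]; [exists a|exists b]; split; auto.
  - intros [w [[-> | ->] ->]]; [left|right]; auto.
Qed.

Lemma k_meet2 a b : k (meet2 a b) = meet2 (k a) (k b).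
Proof. unfold meet2. rewrite k_perp, k_join2, !k_perp. reflexivity. Qed.

Lemma k_sasaki m x : k (sasaki m x) = sasaki (k m) (k x).
Proof. unfold sasaki. rewrite k_meet2, k_join2, k_perp. reflexivity. Qed.

Lemma k_otop x0 y0 : k (otop x0) = otop y0.
Proof. apply k_osup. intro z; split; auto. intros _. exists (kinv z). split; auto. rewrite kinvK; auto. Qed.

Definition conjf (f : car O1 -> car O1) : car O2 -> car O2 := fun x => k (f (kinv x)).

Lemma conj_adj f g : adjoint f g -> adjoint (conjf f) (conjf g).
Proof.
  intros A x y. unfold conjf.
  assert (e1 : operp y = k (operp (kinv y))) by (rewrite k_perp, kinvK; auto).
  rewrite e1, <- k_le, (A (kinv x) (kinv y)), k_le, kinvK, k_perp. tauto.
Qed.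

Definition conjL (p : LinT O1) : LinT O2 := toLin (conjf (fv p)).

Lemma conj_val p : fv (conjL p) = conjf (fv p).
Proof.
  destruct (lin_adj p) as [g A]. apply toLin_val with (g := conjf g). apply conj_adj; auto.
Qed.

Lemma conj_morph : @IDA_morphism (Lin O1) (Lin O2) conjL.
Proof.
  unfold IDA_morphism; simpl. repeat split.
  - intro W. apply lin_ext; auto. intro x. rewrite conj_val, !join_val; auto. unfold conjf.
    apply k_osup. intro z; split.
    + intros [q [[p [hp ->]] ->]]. exists (fv p (kinv x)). split; [exists p; auto|].
      rewrite conj_val; reflexivity.
    + intros [w [[p [hp ->]] ->]]. exists (conjL p). split; [exists p; auto|].
      rewrite conj_val; reflexivity.
  - intros p q. apply lin_ext; auto. intro x. rewrite conj_val, !comp_val, !conj_val; auto.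
    unfold conjf. rewrite kK. reflexivity.
  - intro p. apply lin_eq. rewrite conj_val. symmetry. apply (star_val_eq H2).
    rewrite !conj_val. apply conj_adj, star_adj; auto.
  - apply lin_ext; auto. intro x. rewrite conj_val. unfold conjf. simpl. apply kinvK.
  - intro p. apply lin_ext; auto. intro x. rewrite conj_val. unfold conjf.
    rewrite !neg_val; auto. rewrite k_sasaki, k_perp, kinvK, conj_val. unfold conjf.
    rewrite <- (k_otop (kinv x) x), kK. reflexivity.
Qed.

End Conj.

End P4.
Import P4.

Module P5.
Set Implicit Arguments.

Lemma subL_eq (O : OrthoSig) (L : LinT O -> Prop) (c d : subL L) : proj1_sig c = proj1_sig d -> c = d.
Proof. destruct c, d; simpl; intros ->. f_equal. apply proof_irrelevance. Qed.

Lemma NA_eq (O : OrthoSig) (H : is_cOML O) (L : LinT O -> Prop) (A : subL L -> Prop) :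
  toLin (fun x => sasaki (@operp O
       (osup x (fun y => exists a, A a /\ y = proj1_sig (proj1_sig a) (otop x)))) x)
  = linNeg (linJoin (fun f => exists a, A a /\ f = proj1_sig a)).
Proof.
  unfold linNeg. f_equal. apply functional_extensionality. intro x. f_equal. f_equal.
  rewrite join_val; auto. apply osup_ext; auto. intro w; split.
  - intros [a [ha ->]]. exists (proj1_sig a). split; eauto.
  - intros [f [[a [ha ->]] ->]]. eauto.
Qed.


End P5.
Import P5.

Theorem lemma5p2 (T : TFun) (HT1 : T1 T) (HT2 : T2 T) (HT3 : T3 T) (HT4 : T4 T)
  (M1 M2 : OrthoSig) (HM1 : is_cOML M1) (HM2 : is_cOML M2)
  (k : car M1 -> car M2) (kinv : car M2 -> car M1) (Hk : @ortho_iso M1 M2 k kinv) :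
  @IDA_morphism (Gamma T M1) (Gamma T M2) (@GammaMap T M1 M2 k kinv) /\ bijectiveF (@GammaMap T M1 M2 k kinv).
Proof.
  pose proof (ortho_iso_sym Hk) as Hk'.
  pose proof (conj_morph HM1 HM2 Hk) as m1.
  pose proof (conj_morph HM2 HM1 Hk') as m2.
  pose proof (HT4 _ _ _ (Lin_is_IDA HM1) (Lin_is_IDA HM2) m1) as T12.
  pose proof (HT4 _ _ _ (Lin_is_IDA HM2) (Lin_is_IDA HM1) m2) as T21.
  destruct m1 as [mJ [mM [mS [mU mN]]]]. destruct m2 as [mJ' [mM' [mS' [mU' mN']]]].
  simpl in *.
  set (C := conjL M2 k kinv) in *. set (C' := conjL M1 kinv k) in *.
  assert (CK : forall p, C' (C p) = p).
  { intro p. apply lin_ext. intro x. unfold C, C'. rewrite (conj_val Hk'), (conj_val Hk).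
    unfold conjf. destruct Hk as [e1 [e2 _]]. rewrite !e1. reflexivity. }
  assert (CK' : forall p, C (C' p) = p).
  { intro p. apply lin_ext. intro x. unfold C, C'. rewrite (conj_val Hk), (conj_val Hk').
    unfold conjf. destruct Hk as [e1 [e2 _]]. rewrite !e2. reflexivity. }
  set (Phi := fun a : subL (T (Lin M1)) => exist (T (Lin M2)) (C (proj1_sig a)) (T12 _ (proj2_sig a))).
  set (Psi := fun b : subL (T (Lin M2)) => exist (T (Lin M1)) (C' (proj1_sig b)) (T21 _ (proj2_sig b))).
  assert (PP : forall a, Psi (Phi a) = a). { intro a. apply subL_eq. simpl. apply CK. }
  assert (PP' : forall b, Phi (Psi b) = b). { intro b. apply subL_eq. simpl. apply CK'. }
  assert (pc : forall c, proj1_sig c = C (proj1_sig (Psi c))).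
  { intro c. rewrite <- (PP' c) at 1. reflexivity. }
  assert (GE : forall A, @GammaMap T M1 M2 k kinv A = fun b => A (Psi b)).
  { intro A. apply functional_extensionality. intro b. apply propositional_extensionality. split.
    - intros [a [ha e]]. assert (b = Phi a) as ->.
      { apply subL_eq. simpl. apply lin_eq. rewrite e. unfold C. rewrite (conj_val Hk). reflexivity. }
      rewrite PP. exact ha.
    - intro h. exists (Psi b). split; auto. rewrite (pc b). unfold C. rewrite (conj_val Hk). reflexivity. }
  split.
  - unfold IDA_morphism. simpl. repeat split.
    + intro W. rewrite GE. apply functional_extensionality. intro b. apply propositional_extensionality.
      unfold Pjoin. split.
      * intros [A [hA hb]]. exists (@GammaMap T M1 M2 k kinv A). split; [exists A; auto|]. rewrite GE. exact hb.
      * intros [A' [[A [hA ->]] hb]]. rewrite GE in hb. exists A; auto.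
    + intros A B. rewrite !GE. apply functional_extensionality. intro c. apply propositional_extensionality.
      unfold Pmul. split.
      * intros [a [b [ha [hb e]]]]. exists (Phi a), (Phi b). rewrite !PP. split; auto. split; auto.
        rewrite (pc c). etransitivity; [apply f_equal; exact e|]. apply mM.
      * intros [a [b [ha [hb e]]]]. exists (Psi a), (Psi b). split; auto. split; auto.
        simpl. etransitivity; [apply f_equal; exact e|]. apply mM'.
    + intro A. rewrite !GE. apply functional_extensionality. intro c. apply propositional_extensionality.
      unfold Pstar. split.
      * intros [a [ha e]]. exists (Phi a). rewrite PP. split; auto. rewrite (pc c). etransitivity; [apply f_equal; exact e|]. apply mS.
      * intros [a [ha e]]. exists (Psi a). split; auto. simpl. etransitivity; [apply f_equal; exact e|]. apply mS'.
    + rewrite GE. apply functional_extensionality. intro c. apply propositional_extensionality.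
      unfold Punit. split.
      * intro e. rewrite (pc c). etransitivity; [apply f_equal; exact e|]. apply mU.
      * intro e. simpl. etransitivity; [apply f_equal; exact e|]. apply mU'.
    + intro A. rewrite !GE. apply functional_extensionality. intro c. apply propositional_extensionality.
      unfold Pneg. rewrite !(NA_eq HM1), !(NA_eq HM2).
      set (F := fun f => exists a, A a /\ f = proj1_sig a).
      set (NA := linNeg (linJoin F)).
      assert (E : C NA = linNeg (linJoin (fun f => exists a, A (Psi a) /\ f = proj1_sig a))).
      { unfold NA. rewrite mN, mJ. f_equal. f_equal.
        apply functional_extensionality. intro f. apply propositional_extensionality. split.
        - intros [g [[a [ha ->]] ->]]. exists (Phi a). rewrite PP. split; auto.
        - intros [b [hb ->]]. exists (proj1_sig (Psi b)). split; [exists (Psi b); auto|]. apply pc. }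
      rewrite <- E. split.
      * intro e. rewrite (pc c). apply f_equal; exact e.
      * intro e. simpl. etransitivity; [apply f_equal; exact e|]. apply CK.
  - split.
    + intros A A' e. rewrite !GE in e. apply functional_extensionality. intro a.
      pose proof (f_equal (fun P => P (Phi a)) e) as e'. simpl in e'. rewrite PP in e'. exact e'.
    + intro Z. exists (fun a => Z (Phi a)). rewrite GE. apply functional_extensionality. intro b.
      rewrite PP'. reflexivity.
Qed.
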